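(* Let $(\mathcal{T},[1],\Delta)$ be a triangulated category, let $\mathcal{N}$ be a triangulated subcategory of $\mathcal{T}$, and let $(\mathcal{U},\mathcal{X},\mathcal{V})$ be an $\mathcal{N}$-localization triple in $\mathcal{T}$. (i) If $\mathcal{U}\cap\mathcal{V}$ is a Frobenius special $\mathcal{X}$-monic closed subcategory of $\mathcal{T}$, then $(\mathcal{U},\mathcal{X},\mathcal{V})$ satisfies the Verdier condition. (ii) If $\mathcal{U}\cap\mathcal{V}$ is a Frobenius special $\mathcal{X}$-epic closed subcategory of $\mathcal{T}$, then $(\mathcal{U},\mathcal{X},\mathcal{V})$ satisfies the Verdier condition.
   Context: $\Delta$ denotes the class of distinguished triangles of $\mathcal{T}$. All subcategories are full, additive and closed under isomorphisms. For additive subcategories $\mathcal{X}\subseteq\mathcal{C}$ of $\mathcal{T}$, the factor category $\mathcal{C}/[\mathcal{X}]$ has the objects of $\mathcal{C}$ and $\mathrm{Hom}_{\mathcal{C}/[\mathcal{X}]}(A,B)=\mathrm{Hom}_{\mathcal{T}}(A,B)/\mathcal{X}(A,B)$, where $\mathcal{X}(A,B)$ consists of the morphisms factoring through an object of $\mathcal{X}$; $\underline{f}$ denotes the class of $f$. For a subcategory $\mathcal{Y}$, a morphism $f\colon A\to B$ is $\mathcal{Y}$-monic if $\mathrm{Hom}_{\mathcal{T}}(B,Y)\to\mathrm{Hom}_{\mathcal{T}}(A,Y)$, $g\mapsto gf$, is surjective for all $Y\in\mathcal{Y}$, and $\mathcal{Y}$-epic dually; a $\mathcal{Y}$-preenvelope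 of $A$ is a $\mathcal{Y}$-monic $A\to Y$ with $Y\in\mathcal{Y}$, and a $\mathcal{Y}$-precover of $A$ is a $\mathcal{Y}$-epic $Y\to A$ with $Y\in\mathcal{Y}$. Special $\mathcal{X}$-monic closed: an additive subcategory $\mathcal{C}\supseteq\mathcal{X}$ such that (a) for every $A\in\mathcal{C}$ there is a triangle $A\xrightarrow{i}X\to U\to A[1]$ in $\Delta$ with $U\in\mathcal{C}$ and $i$ an $\mathcal{X}$-preenvelope; (b) whenever $A\xrightarrow{i}X\to U\to A[1]$ is in $\Delta$ with $A,U\in\mathcal{C}$ and $i$ an $\mathcal{X}$-preenvelope, then for every morphism $f\colon A\to B$ in $\mathcal{C}$ there is a triangle $A\xrightarrow{\binom{i}{f}}X\oplus B\to N\to A[1]$ in $\Delta$ with $N\in\mathcal{C}$. Special $\mathcal{X}$-epic closed is the dual notion: $\mathcal{X}\subseteq\mathcal{C}$, every $A\in\mathcal{C}$ admits a triangle $U\to X\xrightarrow{\pi}A\to U[1]$ in $\Delta$ with $U\in\mathcal{C}$ and $\pi$ an $\mathcal{X}$-precover, and for any such triangle and any morphism $f\colon B\to A$ in $\mathcal{C}$ there is a triangle $N\to X\oplus B\xrightarrow{(\pi\ f)}A\to N[1]$ in $\Delta$ with $N\in\mathcal{C}$. A special $\mathcal{X}$-monic closed $\mathcal{C}$ is Frobenius if (a) for each $A\in\mathcal{C}$ there is a triangle $K\xrightarrow{u}X\xrightarrow{v}A\to K[1]$ in $\Delta$ with $K\in\mathcal{C}$ and $u$ an $\mathcal{X}$-preenvelope,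 and (b) for each $A\in\mathcal{C}$ the triangle $A\xrightarrow{i^A}X^A\xrightarrow{p^A}U^A\to A[1]$ of (a) in the definition of special $\mathcal{X}$-monic closed (chosen and fixed for each $A$) has $p^A$ an $\mathcal{X}$-precover. Dually, a special $\mathcal{X}$-epic closed $\mathcal{C}$ is Frobenius if for each $A\in\mathcal{C}$ there is a triangle $A\xrightarrow{}X\xrightarrow{v}K\to A[1]$ in $\Delta$ with $K\in\mathcal{C}$ and $v$ an $\mathcal{X}$-precover, and the fixed triangles $U_A\xrightarrow{\iota_A}X_A\xrightarrow{\pi_A}A\to U_A[1]$ ($\pi_A$ an $\mathcal{X}$-precover, $U_A\in\mathcal{C}$) have $\iota_A$ an $\mathcal{X}$-preenvelope. For additive subcategories $\mathcal{U},\mathcal{V}\supseteq\mathcal{X}$ of an additive subcategory $\mathcal{A}$, put $\mathcal{U}^{\perp_{\mathcal{A}/[\mathcal{X}]}}=\{W\in\mathcal{A}:\mathrm{Hom}_{\mathcal{A}/[\mathcal{X}]}(\mathcal{U},W)=0\}$ and ${}^{\perp_{\mathcal{A}/[\mathcal{X}]}}\mathcal{V}=\{W\in\mathcal{A}:\mathrm{Hom}_{\mathcal{A}/[\mathcal{X}]}(W,\mathcal{V})=0\}$. A triple $(\mathcal{U},\mathcal{X},\mathcal{V})$ with $\mathcal{X}\subseteq\mathcal{U}\cap\mathcal{V}$ and $\mathcal{U},\mathcal{V}\subseteq\mathcal{A}$ is a localization triple of $\mathcal{A}$ if: (a) each $A\in\mathcal{A}$ admits a triangle $A[-1]\to W_A\to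 Q(A)\xrightarrow{r_A}A$ in $\Delta$ with $r_A$ a $\mathcal{U}$-precover and $W_A\in\mathcal{U}^{\perp_{\mathcal{A}/[\mathcal{X}]}}$; (b) each $A\in\mathcal{A}$ admits a triangle $A\xrightarrow{j^A}R(A)\to W^A\to A[1]$ in $\Delta$ with $j^A$ a $\mathcal{V}$-preenvelope and $W^A\in{}^{\perp_{\mathcal{A}/[\mathcal{X}]}}\mathcal{V}$; (c) if $A\in\mathcal{V}$ then $Q(A)\in\mathcal{U}\cap\mathcal{V}$ and $W_A\in(\mathcal{U}\cap\mathcal{V})^{\perp_{\mathcal{V}/[\mathcal{X}]}}$, and if $A\in\mathcal{U}$ then $R(A)\in\mathcal{U}\cap\mathcal{V}$ and $W^A\in{}^{\perp_{\mathcal{U}/[\mathcal{X}]}}(\mathcal{U}\cap\mathcal{V})$. A localization triple $(\mathcal{U},\mathcal{X},\mathcal{V})$ of $\mathcal{T}$ is an $\mathcal{N}$-localization triple if $\mathcal{X}=\mathcal{U}\cap\mathcal{V}\cap\mathcal{N}$ and $\mathcal{U}^{\perp_{\mathcal{T}/[\mathcal{X}]}}\subseteq\mathcal{N}$, ${}^{\perp_{\mathcal{T}/[\mathcal{X}]}}\mathcal{V}\subseteq\mathcal{N}$. It satisfies the Verdier condition if for every triangle $A\xrightarrow{s}B\to N\to A[1]$ in $\Delta$ with $A,B\in\mathcal{U}\cap\mathcal{V}$ and $N\in\mathcal{N}$, the class $\underline{s}$ is an isomorphism in $(\mathcal{U}\cap\mathcal{V})/[\mathcal{X}]$. *)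

(* Defs.v *)
From HB Require Import structures.
From mathcomp Require Import all_boot all_algebra.
Set Implicit Arguments. Unset Strict Implicit. Unset Printing Implicit Defensive.
Import GRing.Theory.
Local Open Scope ring_scope.

(* Data of a preadditive category with zero object, chosen biproducts,
   a shift functor [1] and a class Delta of distinguished triangles
   A --u--> B --v--> C --w--> A[1]. *)
Record PreTri := {
  Ob : Type;
  Hom : Ob -> Ob -> zmodType;
  comp : forall A B C : Ob, Hom B C -> Hom A B -> Hom A C;
  idm : forall A : Ob, Hom A A;
  sh : Ob -> Ob;
  shm : forall A B : Ob, Hom A B -> Hom (sh A) (sh B);
  zo : Ob;
  bp : Ob -> Ob -> Ob;
  bin1 : forall A B : Ob, Hom A (bp A B);
  bin2 : forall A B : Ob, Hom B (bp A B);
  bpr1 : forall A B : Ob, Hom (bp A B) A;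
  bpr2 : forall A B : Ob, Hom (bp A B) B;
  Dist : forall A B C : Ob, Hom A B -> Hom B C -> Hom C (sh A) -> Prop
}.

Arguments Hom {p}.
Arguments comp {p A B C}.
Arguments idm {p}.
Arguments sh {p}.
Arguments shm {p A B}.
Arguments zo {p}.
Arguments bp {p}.
Arguments bin1 {p A B}.
Arguments bin2 {p A B}.
Arguments bpr1 {p A B}.
Arguments bpr2 {p A B}.
Arguments Dist {p A B C}.

Section TriAx.
Variable T : PreTri.
Local Notation "g \oo f" := (comp g f) (at level 40, left associativity).

Definition is_iso (A B : Ob T) (f : Hom A B) :=
  exists g : Hom B A, g \oo f = idm A /\ f \oo g = idm B.
Definition iso_ob (A B : Ob T) := exists f : Hom A B, is_iso f.

Definition preadd_ax :=
  [/\ (forall (A B C D : Ob T) (h : Hom C D) (g : Hom B C) (f : Hom A B),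
         h \oo (g \oo f) = (h \oo g) \oo f),
      (forall (A B : Ob T) (f : Hom A B), idm B \oo f = f),
      (forall (A B : Ob T) (f : Hom A B), f \oo idm A = f),
      (forall (A B C : Ob T) (g g' : Hom B C) (f : Hom A B),
         (g + g') \oo f = g \oo f + g' \oo f) &
      (forall (A B C : Ob T) (g : Hom B C) (f f' : Hom A B),
         g \oo (f + f') = g \oo f + g \oo f')].

Definition zero_ax :=
  (forall (A : Ob T) (f : Hom A zo), f = 0) /\
  (forall (A : Ob T) (f : Hom zo A), f = 0).

Definition biprod_ax :=
  forall A B : Ob T,
  [/\ bpr1 \oo (@bin1 T A B) = idm A,
      bpr2 \oo (@bin2 T A B) = idm B,
      bpr1 \oo (@bin2 T A B) = 0,
      bpr2 \oo (@bin1 T A B) = 0 &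
      bin1 \oo bpr1 + bin2 \oo bpr2 = idm (bp A B)].

Definition shift_ax :=
  [/\ (forall A : Ob T, shm (idm A) = idm (sh A)),
      (forall (A B C : Ob T) (g : Hom B C) (f : Hom A B),
         shm (g \oo f) = shm g \oo shm f),
      (forall (A B : Ob T) (f g : Hom A B), shm (f + g) = shm f + shm g),
      (forall A B : Ob T, bijective (@shm T A B)) &
      (forall B : Ob T, exists A : Ob T, iso_ob (sh A) B)].

Definition TR1 :=
  [/\ (forall (A B C A' B' C' : Ob T)
          (u : Hom A B) (v : Hom B C) (w : Hom C (sh A))
          (u' : Hom A' B') (v' : Hom B' C') (w' : Hom C' (sh A'))
          (a : Hom A A') (b : Hom B B') (c : Hom C C'),
          is_iso a -> is_iso b -> is_iso c ->
          b \oo u = u' \oo a -> c \oo v = v' \oo b -> shm a \oo w = w' \oo c ->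
          Dist u v w -> Dist u' v' w'),
      (forall A : Ob T, Dist (idm A) (0 : Hom A zo) (0 : Hom zo (sh A))) &
      (forall (A B : Ob T) (u : Hom A B),
          exists C (v : Hom B C) (w : Hom C (sh A)), Dist u v w)].

Definition TR2 :=
  forall (A B C : Ob T) (u : Hom A B) (v : Hom B C) (w : Hom C (sh A)),
    Dist u v w <-> Dist v w (- shm u).

Definition TR3 :=
  forall (A B C A' B' C' : Ob T)
         (u : Hom A B) (v : Hom B C) (w : Hom C (sh A))
         (u' : Hom A' B') (v' : Hom B' C') (w' : Hom C' (sh A'))
         (a : Hom A A') (b : Hom B B'),
    Dist u v w -> Dist u' v' w' -> b \oo u = u' \oo a ->
    exists c : Hom C C', c \oo v = v' \oo b /\ shm a \oo w = w' \oo c.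

Definition TR4 :=
  forall (X Y Z Z' X' Y' : Ob T)
         (u : Hom X Y) (j : Hom Y Z') (k : Hom Z' (sh X))
         (v : Hom Y Z) (l : Hom Z X') (i : Hom X' (sh Y))
         (m : Hom Z Y') (n : Hom Y' (sh X)),
    Dist u j k -> Dist v l i -> Dist (v \oo u) m n ->
    exists (f : Hom Z' Y') (g : Hom Y' X'),
      [/\ Dist f g (shm j \oo i),
          f \oo j = m \oo v, n \oo f = k,
          g \oo m = l & i \oo g = shm u \oo n].

End TriAx.

Record TriCat := {
  PT :> PreTri;
  tc_preadd : preadd_ax PT;
  tc_zero : zero_ax PT;
  tc_biprod : biprod_ax PT;
  tc_shift : shift_ax PT;
  tc_TR1 : TR1 PT;
  tc_TR2 : TR2 PT;
  tc_TR3 : TR3 PT;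
  tc_TR4 : TR4 PT
}.

Section Notions.
Variable T : TriCat.
Local Notation "g \oo f" := (comp g f) (at level 40, left associativity).
Local Notation Obj := (Ob (PT T)).

Definition addsub (P : Obj -> Prop) :=
  [/\ P zo, (forall A B, P A -> P B -> P (bp A B)) &
      (forall A B, iso_ob A B -> P A -> P B)].

Definition tri_sub (N : Obj -> Prop) :=
  [/\ addsub N, (forall A, N A <-> N (sh A)) &
      (forall (A B C : Obj) (u : Hom A B) (v : Hom B C) (w : Hom C (sh A)),
         Dist u v w -> N A -> N B -> N C)].

(* f belongs to X(A,B): factors through an object of X *)
Definition factors (X : Obj -> Prop) (A B : Obj) (f : Hom A B) :=
  exists (Y : Obj) (g : Hom A Y) (h : Hom Y B), X Y /\ f = h \oo g.

(* Hom_{A/[X]}(P, W) = 0 with W in A : W in P^{perp_{A/[X]}} *)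
Definition rperp (Amb P X : Obj -> Prop) (W : Obj) :=
  Amb W /\ forall Y, P Y -> forall f : Hom Y W, factors X f.
(* Hom_{A/[X]}(W, P) = 0 with W in A : W in ^{perp_{A/[X]}}P *)
Definition lperp (Amb P X : Obj -> Prop) (W : Obj) :=
  Amb W /\ forall Y, P Y -> forall f : Hom W Y, factors X f.

Definition monic (Y : Obj -> Prop) (A B : Obj) (f : Hom A B) :=
  forall Z, Y Z -> forall g : Hom A Z, exists h : Hom B Z, h \oo f = g.
Definition epic (Y : Obj -> Prop) (A B : Obj) (f : Hom A B) :=
  forall Z, Y Z -> forall g : Hom Z B, exists h : Hom Z A, f \oo h = g.
Definition preenvelope (Y : Obj -> Prop) (A B : Obj) (f : Hom A B) :=
  Y B /\ monic Y f.
Definition precover (Y : Obj -> Prop) (A B : Obj) (f : Hom A B) :=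
  Y A /\ epic Y f.

(* the class of s is an isomorphism in the factor category modulo [X] *)
Definition iso_mod (X : Obj -> Prop) (A B : Obj) (s : Hom A B) :=
  exists t : Hom B A, factors X (t \oo s - idm A) /\ factors X (s \oo t - idm B).

Definition colpair (A X B : Obj) (i : Hom A X) (f : Hom A B) : Hom A (bp X B) :=
  bin1 \oo i + bin2 \oo f.
Definition rowpair (A X B : Obj) (p : Hom X A) (f : Hom B A) : Hom (bp X B) A :=
  p \oo bpr1 + f \oo bpr2.

Definition special_monic_closed (X C : Obj -> Prop) :=
  [/\ (forall Z, X Z -> C Z),
      (forall A, C A -> exists (X0 U0 : Obj) (i : Hom A X0) (p : Hom X0 U0)
                               (q : Hom U0 (sh A)),
          [/\ Dist i p q, C U0 & preenvelope X i]) &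
      (forall (A X0 U0 : Obj) (i : Hom A X0) (p : Hom X0 U0) (q : Hom U0 (sh A)),
          Dist i p q -> C A -> C U0 -> preenvelope X i ->
          forall (B : Obj) (f : Hom A B), C B ->
          exists (N0 : Obj) (g : Hom (bp X0 B) N0) (h : Hom N0 (sh A)),
            Dist (colpair i f) g h /\ C N0)].

Definition special_epic_closed (X C : Obj -> Prop) :=
  [/\ (forall Z, X Z -> C Z),
      (forall A, C A -> exists (U0 X0 : Obj) (j : Hom U0 X0) (p : Hom X0 A)
                               (q : Hom A (sh U0)),
          [/\ Dist j p q, C U0 & precover X p]) &
      (forall (A X0 U0 : Obj) (j : Hom U0 X0) (p : Hom X0 A) (q : Hom A (sh U0)),
          Dist j p q -> C A -> C U0 -> precover X p ->
          forall (B : Obj) (f : Hom B A), C B ->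
          exists (N0 : Obj) (g : Hom N0 (bp X0 B)) (h : Hom A (sh N0)),
            Dist g (rowpair p f) h /\ C N0)].

Definition frobenius_monic_closed (X C : Obj -> Prop) :=
  [/\ special_monic_closed X C,
      (forall A, C A -> exists (K X0 : Obj) (u : Hom K X0) (v : Hom X0 A)
                               (w : Hom A (sh K)),
          [/\ Dist u v w, C K & preenvelope X u]) &
      (forall A, C A -> exists (X0 U0 : Obj) (i : Hom A X0) (p : Hom X0 U0)
                               (q : Hom U0 (sh A)),
          [/\ Dist i p q, C U0, preenvelope X i & precover X p])].

Definition frobenius_epic_closed (X C : Obj -> Prop) :=
  [/\ special_epic_closed X C,
      (forall A, C A -> exists (X0 K : Obj) (u : Hom A X0) (v : Hom X0 K)
                               (w : Hom K (sh A)),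
          [/\ Dist u v w, C K & precover X v]) &
      (forall A, C A -> exists (U0 X0 : Obj) (j : Hom U0 X0) (p : Hom X0 A)
                               (q : Hom A (sh U0)),
          [/\ Dist j p q, C U0, precover X p & preenvelope X j])].

Definition all_ob (_ : Obj) := True.

Definition loc_triple (U X V : Obj -> Prop) :=
  let UV := fun Y => U Y /\ V Y in
  [/\ (forall Z, X Z -> UV Z),
      (forall A, exists (W Q : Obj) (s : Hom W Q) (r : Hom Q A) (t : Hom A (sh W)),
          [/\ Dist s r t, precover U r, rperp all_ob U X W &
              (V A -> UV Q /\ rperp V UV X W)]) &
      (forall A, exists (R W : Obj) (j : Hom A R) (p : Hom R W) (q : Hom W (sh A)),
          [/\ Dist j p q, preenvelope V j, lperp all_ob V X W &
              (U A -> UV R /\ lperp U UV X W)])].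

Definition N_loc_triple (N U X V : Obj -> Prop) :=
  [/\ loc_triple U X V,
      (forall Z, X Z <-> [/\ U Z, V Z & N Z]),
      (forall W, rperp all_ob U X W -> N W) &
      (forall W, lperp all_ob V X W -> N W)].

Definition verdier_cond (N U X V : Obj -> Prop) :=
  forall (A B C : Obj) (s : Hom A B) (g : Hom B C) (h : Hom C (sh A)),
    U A -> V A -> U B -> V B -> N C -> Dist s g h -> iso_mod X s.

End Notions.

(* Main.v *)
Require Import Defs.
From mathcomp Require Import all_boot all_algebra.
Require Import Defs.
Set Implicit Arguments. Unset Strict Implicit. Unset Printing Implicit Defensive.
Import GRing.Theory.
Local Open Scope ring_scope.

Section Lem.
Variable T : TriCat.
Local Notation "g \oo f" := (comp g f) (at level 40, left associativity).
Local Notation Obj := (Ob (PT T)).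

Lemma compA (A B C D : Obj) (h : Hom C D) (g : Hom B C) (f : Hom A B) :
  h \oo (g \oo f) = h \oo g \oo f.
Proof. by case: (tc_preadd T) => a _ _ _ _; apply: a. Qed.
Lemma comp1l (A B : Obj) (f : Hom A B) : idm B \oo f = f.
Proof. by case: (tc_preadd T) => _ a _ _ _; apply: a. Qed.
Lemma comp1r (A B : Obj) (f : Hom A B) : f \oo idm A = f.
Proof. by case: (tc_preadd T) => _ _ a _ _; apply: a. Qed.
Lemma compDl (A B C : Obj) (g g' : Hom B C) (f : Hom A B) :
  (g + g') \oo f = g \oo f + g' \oo f.
Proof. by case: (tc_preadd T) => _ _ _ a _; apply: a. Qed.
Lemma compDr (A B C : Obj) (g : Hom B C) (f f' : Hom A B) :
  g \oo (f + f') = g \oo f + g \oo f'.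
Proof. by case: (tc_preadd T) => _ _ _ _ a; apply: a. Qed.
Lemma comp0l (A B C : Obj) (f : Hom A B) : (0 : Hom B C) \oo f = 0.
Proof. apply: (@addrI _ ((0 : Hom B C) \oo f)). by rewrite -compDl !addr0. Qed.
Lemma comp0r (A B C : Obj) (g : Hom B C) : g \oo (0 : Hom A B) = 0.
Proof. apply: (@addrI _ (g \oo (0 : Hom A B))). by rewrite -compDr !addr0. Qed.
Lemma compNl (A B C : Obj) (g : Hom B C) (f : Hom A B) : (- g) \oo f = - (g \oo f).
Proof. apply: (@addrI _ (g \oo f)). by rewrite -compDl !addrN comp0l. Qed.
Lemma compNr (A B C : Obj) (g : Hom B C) (f : Hom A B) : g \oo (- f) = - (g \oo f).
Proof. apply: (@addrI _ (g \oo f)). by rewrite -compDr !addrN comp0r. Qed.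
Lemma compBl (A B C : Obj) (g g' : Hom B C) (f : Hom A B) :
  (g - g') \oo f = g \oo f - g' \oo f.
Proof. by rewrite compDl compNl. Qed.
Lemma compBr (A B C : Obj) (g : Hom B C) (f f' : Hom A B) :
  g \oo (f - f') = g \oo f - g \oo f'.
Proof. by rewrite compDr compNr. Qed.

Lemma shm1 (A : Obj) : shm (idm A) = idm (sh A).
Proof. by case: (tc_shift T) => a _ _ _ _; apply: a. Qed.
Lemma shmM (A B C : Obj) (g : Hom B C) (f : Hom A B) : shm (g \oo f) = shm g \oo shm f.
Proof. by case: (tc_shift T) => _ a _ _ _; apply: a. Qed.
Lemma shmD (A B : Obj) (f g : Hom A B) : shm (f + g) = shm f + shm g.
Proof. by case: (tc_shift T) => _ _ a _ _; apply: a. Qed.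
Lemma shm0 (A B : Obj) : shm (0 : Hom A B) = 0.
Proof. apply: (@addrI _ (shm (0 : Hom A B))). by rewrite -shmD !addr0. Qed.
Lemma shmN (A B : Obj) (f : Hom A B) : shm (- f) = - shm f.
Proof. apply: (@addrI _ (shm f)). by rewrite -shmD !addrN shm0. Qed.
Lemma shm_inj (A B : Obj) : injective (@shm T A B).
Proof. case: (tc_shift T) => _ _ _ a _; exact: bij_inj (a A B). Qed.
Lemma shm_surj (A B : Obj) (c : Hom (sh A) (sh B)) : exists f, shm f = c.
Proof. case: (tc_shift T) => _ _ _ a _; case: (a A B) => g _ K. by exists (g c). Qed.

Lemma rot (A B C : Obj) (u : Hom A B) (v : Hom B C) (w : Hom C (sh A)) :
  Dist u v w -> Dist v w (- shm u).
Proof. exact: (proj1 (tc_TR2 u v w)). Qed.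

Lemma dist_id (A : Obj) : Dist (idm A) (0 : Hom A zo) (0 : Hom zo (sh A)).
Proof. by case: (tc_TR1 T) => _ a _; apply: a. Qed.

Lemma dist_comp0 (A B C : Obj) (u : Hom A B) (v : Hom B C) (w : Hom C (sh A)) :
  Dist u v w -> v \oo u = 0.
Proof.
move=> H.
have [c [Hc _]] := tc_TR3 (dist_id A) H (a := idm A) (b := u) erefl.
by rewrite -Hc comp0r.
Qed.

Lemma exact_cov (A B C Z : Obj) (u : Hom A B) (v : Hom B C) (w : Hom C (sh A))
  (f : Hom Z B) : Dist u v w -> v \oo f = 0 -> exists c, f = u \oo c.
Proof.
move=> H vf.
have H1 := rot (dist_id Z). have H2 := rot H.
have [c [_ Hc]] := tc_TR3 H1 H2 (a := f) (b := (0 : Hom zo C))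
  (ltac:(by rewrite comp0l vf)).
move: Hc; rewrite shm1 compNr compNl comp1r => /oppr_inj.
have [c' <-] := shm_surj c.
rewrite -shmM => /shm_inj ->. by exists c'.
Qed.

Lemma split0 (A B C : Obj) (u : Hom A B) (v : Hom B C) :
  Dist u v (0 : Hom C (sh A)) ->
  exists (sg : Hom C B) (rho : Hom B A),
    [/\ v \oo sg = idm C, u \oo rho + sg \oo v = idm B & rho \oo u = idm A].
Proof.
move=> H.
have H1 := rot H.
have [sg Hs] := exact_cov (f := idm C) H1 (comp0l _ _).
have vu := dist_comp0 H.
have [rho Hr] : exists rho, idm B - sg \oo v = u \oo rho.
  apply: (exact_cov H).
  by rewrite compBr comp1r compA -Hs comp1l subrr.
exists sg, rho; split => //; first by rewrite -Hr subrK.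
set x := rho \oo u - idm A.
have ux : u \oo x = 0.
  by rewrite /x compBr comp1r compA -Hr compBl comp1l -compA vu comp0r subr0 subrr.
have H2 := rot (rot H).
have [c Hc] := exact_cov (f := shm x) H2
  (ltac:(by rewrite compNl -shmM ux shm0 oppr0)).
rewrite comp0l -(shm0 A A) in Hc.
move/shm_inj: Hc => /eqP; rewrite subr_eq0 => /eqP.
done.
Qed.

Lemma split_dist (P S Q : Obj) (e : Hom P S) (pi : Hom S Q) (e' : Hom Q S) (pi' : Hom S P) :
  pi' \oo e = idm P -> pi \oo e' = idm Q -> pi \oo e = 0 ->
  e \oo pi' + e' \oo pi = idm S ->
  Dist e pi (0 : Hom Q (sh P)).
Proof.
move=> h1 h2 h3 h4.
case: (tc_TR1 T) => Hiso _ Hcone.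
have [C' [v [w H]]] := Hcone _ _ e.
have w0 : w = 0.
  have E := dist_comp0 (rot (rot H)).
  have := congr1 (fun k => shm pi' \oo k) E; rewrite /=.
  rewrite comp0r compNl compNr compA -shmM h1 shm1 comp1l => /eqP.
  by rewrite oppr_eq0 => /eqP.
rewrite w0 in H.
have [sg [rho [vs Hsum re]]] := split0 H.
have ve := dist_comp0 H.
have E1 : sg \oo v = idm S - e \oo rho by rewrite -Hsum addrC addKr.
have cv : pi \oo sg \oo v = pi.
  by rewrite -compA E1 compBr comp1r compA h3 comp0l subr0.
have E2 : e' \oo pi = idm S - e \oo pi' by rewrite -h4 addrC addKr.
apply: (Hiso _ _ _ _ _ _ e v 0 e pi 0 (idm P) (idm S) (pi \oo sg)).
- by exists (idm P); split; rewrite comp1l.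
- by exists (idm S); split; rewrite comp1l.
- exists (v \oo e'); split.
    have -> : v \oo e' \oo (pi \oo sg) = v \oo (e' \oo pi) \oo sg by rewrite !compA.
    by rewrite E2 compBr comp1r compA ve comp0l subr0 vs.
  by rewrite compA cv h2.
- by rewrite comp1l comp1r.
- by rewrite comp1r cv.
- by rewrite comp0r comp0l.
- exact: H.
Qed.
End Lem.

Local Notation "g \oo f" := (comp g f) (at level 40, left associativity).

Theorem lemma4p2 (T : TriCat) (N U X V : Ob (PT T) -> Prop) :
  tri_sub N -> addsub U -> addsub X -> addsub V ->
  N_loc_triple N U X V ->
  (frobenius_monic_closed X (fun Y => U Y /\ V Y) -> verdier_cond N U X V) /\
  (frobenius_epic_closed X (fun Y => U Y /\ V Y) -> verdier_cond N U X V).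
Proof.
move=> [_ Nsh Nclo] HU HX HV [Hloc HXe HNr HNl]; split.
- move=> [[_ _ Hsmc] _ Hfrob] A B C s g h UA VA UB VB NC Hd.
  have [X0 [U0 [i [p [q [Hipq CU0 [XX0 imon] [_ pep]]]]]]] := Hfrob A (conj UA VA).
  have [N0 [g' [h' [Hd' [UN0 VN0]]]]] :=
    Hsmc A X0 U0 i p q Hipq (conj UA VA) CU0 (conj XX0 imon) B s (conj UB VB).
  have [b11 b22 b12 b21 bs] := tc_biprod X0 B.
  have Hsp := rot (split_dist b11 b22 b21 bs).
  have Hcomp : bpr2 \oo colpair i s = s.
    by rewrite /colpair compDr !compA b21 b22 comp0l comp1l add0r.
  have Hd3 : Dist (bpr2 \oo colpair i s) g h by rewrite Hcomp.
  have [f [g2 [Hd2 _ _ _ _]]] := tc_TR4 Hd' Hsp Hd3.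
  have NX0 : N X0 by have [] := (proj1 (HXe X0)) XX0.
  have NN0 : N N0.
    apply/(Nsh N0); apply: (Nclo _ _ _ _ _ _ (rot Hd2)) => //.
    exact: (proj1 (Nsh X0) NX0).
  have XN0 : X N0 by apply/HXe.
  have [c [_ Hc]] := tc_TR3 Hd' Hipq (a := idm A) (b := bpr1)
    (ltac:(by rewrite /colpair compDr !compA b11 b12 comp0l comp1l addr0 comp1r)).
  have [psi Hpsi] := pep N0 XN0 c.
  have qp := dist_comp0 (rot Hipq).
  rewrite shm1 comp1l -Hpsi compA qp comp0l in Hc.
  rewrite Hc in Hd'.
  have [sg [rho [vs Hsum re]]] := split0 Hd'.
  exists (rho \oo bin2); split.
    exists X0, i, (- (rho \oo bin1)); split => //.
    have Hb2 : bin2 \oo s = colpair i s - bin1 \oo i.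
      by rewrite /colpair addrAC subrr add0r.
    by rewrite -compA Hb2 compBr re compNl compA addrAC subrr add0r.
  exists N0, (g' \oo bin2), (- (bpr2 \oo sg)); split => //.
  have E : colpair i s \oo rho = idm _ - sg \oo g' by rewrite -Hsum addrK.
  rewrite -{1}Hcomp -compA (compA (colpair i s) rho) E compBl comp1l compBr b22.
  by rewrite compNl !compA addrAC subrr add0r.
- move=> [[_ _ Hsec] _ Hfrob] A B C s g h UA VA UB VB NC Hd.
  have [U0 [X0 [j [p [q [Hjpq CU0 [XX0 pep] [_ jmon]]]]]]] := Hfrob B (conj UB VB).
  have [N0 [g' [h' [Hd' [UN0 VN0]]]]] :=
    Hsec B X0 U0 j p q Hjpq (conj UB VB) CU0 (conj XX0 pep) A s (conj UA VA).
  have [b11 b22 b12 b21 bs] := tc_biprod X0 A.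
  have Hsp := split_dist b22 b11 b12 (ltac:(by rewrite addrC bs)).
  have Hcomp : rowpair p s \oo bin2 = s.
    by rewrite /rowpair compDl -!compA b12 b22 comp0r comp1r add0r.
  have Hd3 : Dist (rowpair p s \oo bin2) g h by rewrite Hcomp.
  have [f [g2 [Hd2 _ _ _ _]]] := tc_TR4 Hsp (rot Hd') Hd3.
  have NX0 : N X0 by have [] := (proj1 (HXe X0)) XX0.
  have NN0 : N N0.
    apply/(Nsh N0); exact: (Nclo _ _ _ _ _ _ Hd2).
  have XN0 : X N0 by apply/HXe.
  have [c [Hc _]] := tc_TR3 (rot Hjpq) (rot Hd') (a := bin1) (b := idm B)
    (ltac:(by rewrite /rowpair compDl -!compA b11 b21 comp0r comp1r addr0 comp1l)).
  have [c0 Ec0] := shm_surj c.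
  have [psi Hpsi] := jmon N0 XN0 c0.
  have jq := dist_comp0 (rot (rot Hjpq)).
  rewrite compNl in jq; move/eqP: jq; rewrite oppr_eq0 => /eqP jq.
  rewrite comp1r -Ec0 -Hpsi shmM -compA jq comp0r in Hc.
  rewrite -Hc in Hd'.
  have [sg [rho [vs Hsum re]]] := split0 Hd'.
  exists (bpr2 \oo sg); split.
    exists N0, (rho \oo bin2), (- (bpr2 \oo g')); split => //.
    have E : sg \oo rowpair p s = idm _ - g' \oo rho by rewrite -Hsum addrC addKr.
    rewrite -{1}Hcomp compA -(compA bpr2 sg) E compBr comp1r compBl b22.
    by rewrite compNl !compA addrAC subrr add0r.
  exists X0, (bpr1 \oo sg), (- p); split => //.
  rewrite -vs /rowpair compDl compNl !compA.
  by rewrite opprD addrCA subrr addr0.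
Qed.
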